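(* Let $n$ and $b$ be odd positive integers with $n\nmid b$, let $m$ be an even positive integer, and let $q=\gcd(n,b)$. Then $b+m$ and $b-m$ do not both lie in the interval $(n-q,n+q)$ modulo $2n$.
   Context: An integer $x$ lies in the interval $(n-q,n+q)$ modulo $2n$ if some integer congruent to $x$ modulo $2n$ lies in that open real interval. *)

(* Defs.v *)
From Stdlib Require Import ZArith.
Open Scope Z_scope.

Definition in_interval_mod (n q x : Z) : Prop :=
  exists y : Z, (2 * n | y - x) /\ n - q < y /\ y < n + q.

(* Main.v *)
Require Import Defs.
From Stdlib Require Import ZArith Lia.
Open Scope Z_scope.

Theorem lemma12 (n b m : Z) :
  0 < n -> Z.Odd n -> 0 < b -> Z.Odd b -> ~ (n | b) ->
  0 < m -> Z.Even m ->
  ~ (in_interval_mod n (Z.gcd n b) (b + m) /\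
     in_interval_mod n (Z.gcd n b) (b - m)).
Proof.
  intros Hn _ _ _ Hnb _ _ [[y1 [[k1 H1] [A1 B1]]] [y2 [[k2 H2] [A2 B2]]]].
  set (q := Z.gcd n b) in *.
  destruct (Z.gcd_divide_l n b) as [u Hu].
  destruct (Z.gcd_divide_r n b) as [v Hv].
  fold q in Hu, Hv.
  assert (Hq : 0 <= q) by apply Z.gcd_nonneg.
  assert (Hq' : 0 < q) by (destruct (Z.eq_dec q 0); [rewrite e in Hu; lia | lia]).
  set (w := v + u * (k1 + k2 - 1)).
  assert (Hs : y1 + y2 - 2 * n = q * (2 * w)) by (unfold w; nia).
  assert (-2 < 2 * w < 2) by nia.
  assert (w = 0) by lia.
  apply Hnb. exists (1 - k1 - k2). unfold w in *. nia.
Qed.
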